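(* Let $(F_n)_{n\ge0}$ be the Fibonacci sequence ($F_0=0$, $F_1=1$, $F_{n+2}=F_{n+1}+F_n$) and $\Phi=(1+\sqrt5)/2$. Let $c,d$ be fixed positive integers. Then for all positive integers $n,m$ with $n\geq 2$ and $m\leq\lfloor (n+1)/2\rfloor+1$, \[\mathrm{lcm}\left(cF_m+dF_{m-1},\,cF_{m+1}+dF_m,\,\dots,\,cF_n+dF_{n-1}\right)\geq \gcd(c,d)\left(\frac{c\Phi+d}{\Phi\gcd(c,d)}\right)^{\frac{n-1}{2}}\Phi^{\frac{n^2}{4}-\frac{n}{2}-\frac{7}{4}}.\] *)

(* Defs.v *)
From Stdlib Require Import Reals Arith List.
Import ListNotations.
Open Scope R_scope.

Fixpoint fib (n : nat) : nat :=
  match n with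
  | O => O
  | S n' => match n' with
            | O => 1%nat
            | S n'' => (fib n' + fib n'')%nat
            end
  end.

Definition Phi : R := (1 + sqrt 5) / 2.

(* The generalized term c F_k + d F_{k-1} (used for k >= 1). *)
Definition G (c d k : nat) : nat := (c * fib k + d * fib (k - 1))%nat.

Definition lcm_list (l : list nat) : nat := fold_right Nat.lcm 1%nat l.

Definition lcm_range (c d m n : nat) : nat :=
  lcm_list (map (G c d) (seq m (S n - m))).

(* Main.v *)
Require Import Defs.
From Stdlib Require Import Reals Arith List Lia Lra.
Open Scope R_scope.

Fixpoint nprod (h : nat -> nat) (k : nat) : nat :=
  match k with O => 1%nat | S k' => (nprod h k' * h k')%nat end.

Lemma lcm_list_div l x : In x l -> Nat.divide x (lcm_list l).
Proof.
  induction l as [|a l IH]; simpl; [tauto|].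
  intros [->|H].
  - apply Nat.divide_lcm_l.
  - eapply Nat.divide_trans; [apply IH, H| apply Nat.divide_lcm_r].
Qed.

Lemma lcm_list_pos l : (forall x, In x l -> 0 < x)%nat -> (0 < lcm_list l)%nat.
Proof.
  induction l as [|a l IH]; simpl; intros H; [lia|].
  assert (Ha : (0 < a)%nat) by (apply H; auto).
  assert (Hl : (0 < lcm_list l)%nat) by (apply IH; auto).
  destruct (Nat.eq_dec (Nat.lcm a (lcm_list l)) 0) as [E|E]; [|lia].
  apply Nat.lcm_eq_0 in E; lia.
Qed.

Lemma G_div_lcm c d m n k : (m <= k <= n)%nat -> Nat.divide (G c d k) (lcm_range c d m n).
Proof.
  intros Hk. apply lcm_list_div. apply in_map. apply in_seq. lia.
Qed.

Module NT.
From mathcomp Require Import all_boot.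
From mathcomp Require Import zify.
Local Open Scope nat_scope.

Lemma nprodE h k : nprod h k = \prod_(i < k) h i.
Proof. elim: k => [|k IH] /=; first by rewrite big_ord0. by rewrite big_ord_recr /= IH. Qed.

Lemma sum_lt_min a B : \sum_(e < B) (e < a) = minn a B.
Proof.
elim: B => [|B IH]; first by rewrite big_ord0; lia.
rewrite big_ord_recr /= IH. case: (ltnP B a) => h /=; lia.
Qed.

Lemma count_level N (P Q : nat -> bool) :
 (forall i j, i < j <= N -> P i -> P j -> Q (j - i)) ->
 \sum_(i < N.+1) P i <= 1 + \sum_(s < N) Q s.+1.
Proof.
elim: N P => [|N IH] P H; first by rewrite big_ord_recr big_ord0 /=; case: (P 0).
rewrite big_ord_recl /=.
case P0: (P 0) => /=.
  rewrite add1n ltnS; apply: leq_sum => i _.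
  case Pi: (P (bump 0 i)) => //=.
  have hi := ltn_ord i.
  have := H 0 (bump 0 i); rewrite P0 Pi /bump /= subn0 add1n.
  by move=> /(_ hi isT isT) ->.
rewrite add0n.
have -> : \sum_(i < N.+1) P (bump 0 i) = \sum_(i < N.+1) P i.+1.
  by apply: eq_bigr => i _; rewrite /bump /= add1n.
apply: leq_trans (IH (fun i => P i.+1) _) _.
  move=> i j hij Pi Pj; have := H i.+1 j.+1; rewrite subSS; apply => //.
rewrite leq_add2l [X in _ <= X]big_ord_recr /= leq_addr //.
Qed.

Lemma comb N M (a b : nat -> nat) :
 (forall i, i <= N -> a i <= M) ->
 (forall i j, i < j <= N -> minn (a i) (a j) <= b (j - i)) ->
 \sum_(i < N.+1) a i <= M + \sum_(s < N) b s.+1.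
Proof.
move=> ha hb.
have E : \sum_(i < N.+1) a i = \sum_(i < N.+1) \sum_(e < M) (e < a i).
  apply: eq_bigr => i _; rewrite sum_lt_min.
  have := ha i (ltn_ord i); lia.
rewrite E exchange_big /=.
have H1 : \sum_(e < M) \sum_(i < N.+1) (e < a i) <= \sum_(e < M) (1 + \sum_(s < N) (e < b s.+1)).
  apply: leq_sum => e _; apply: (@count_level N (fun i => e < a i) (fun s => e < b s)) => i j hij Pi Pj.
  have := hb i j hij; lia.
apply: leq_trans H1 _.
rewrite big_split /= sum_nat_const card_ord muln1 leq_add2l exchange_big /=.
apply: leq_sum => s _; rewrite sum_lt_min; lia.
Qed.

Lemma logn_prod p n (x : nat -> nat) : (forall i, i < n -> 0 < x i) ->
  logn p (\prod_(i < n) x i) = \sum_(i < n) logn p (x i).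
Proof.
elim: n => [|n IH] hx; first by rewrite !big_ord0 logn1.
have h1 : forall i, i < n -> 0 < x i by move=> i hi; apply: hx; lia.
rewrite !big_ord_recr /= lognM ?IH //; last by apply: hx.
by apply: prodn_gt0 => i; apply: h1.
Qed.

Lemma dvdn_from_logn a b : 0 < a -> 0 < b ->
  (forall p, prime p -> logn p a <= logn p b) -> a %| b.
Proof.
move=> ha hb H.
have <- : gcdn a b = a.
  apply: eqn_from_log => //; first by rewrite gcdn_gt0 ha.
  move=> p; rewrite logn_gcd //.
  case pp: (prime p); first by have := H p pp; lia.
  by rewrite /logn pp.
by rewrite dvdn_gcdr.
Qed.

Lemma key N L (x f : nat -> nat) :
 0 < L -> (forall i, i <= N -> 0 < x i) -> (forall i, i <= N -> x i %| L) ->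
 (forall s, 0 < s <= N -> 0 < f s) ->
 (forall i j, i < j <= N -> gcdn (x i) (x j) %| f (j - i)) ->
 \prod_(i < N.+1) x i %| L * \prod_(s < N) f s.+1.
Proof.
move=> hL hx hxL hf hg.
have hF : 0 < \prod_(s < N) f s.+1.
  by apply: prodn_gt0 => s; apply: hf; have := ltn_ord s; lia.
apply: dvdn_from_logn.
- by apply: prodn_gt0 => i; apply: hx; have := ltn_ord i; lia.
- by rewrite muln_gt0 hL hF.
move=> p pp.
rewrite lognM // (logn_prod p N.+1 x); last by move=> i hi; apply: hx.
rewrite (logn_prod p N (fun s => f s.+1)); last by move=> s hs; apply: hf; lia.
apply: (@comb N (logn p L) (fun i => logn p (x i)) (fun s => logn p (f s))).
- by move=> i hi; apply: dvdn_leq_log => //; apply: hxL.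
- move=> i j hij; rewrite -logn_gcd; try (apply: hx; lia).
  apply: dvdn_leq_log; first by apply: hf; lia.
  exact: hg.
Qed.


Lemma fibSS k : fib k.+2 = fib k.+1 + fib k.
Proof. by []. Qed.

Lemma fib_pos k : 0 < k -> 0 < fib k.
Proof.
elim/ltn_ind: k => k IH hk.
case: k IH hk => [|[|k]] IH hk //.
rewrite fibSS; have := IH k.+1 (ltnSn _) isT; lia.
Qed.

Section GS.
Variables c d : nat.
Notation G := (G c d).

Lemma GE k : G k = c * fib k + d * fib (k - 1).
Proof. by []. Qed.

Lemma GSS k : 0 < k -> G k.+2 = G k.+1 + G k.
Proof.
case: k => [|k] // _.
have e1 : k.+3 - 1 = k.+2 by lia.
have e2 : k.+2 - 1 = k.+1 by lia.
have e3 : k.+1 - 1 = k by lia.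
have h3 : fib k.+3 = fib k.+2 + fib k.+1 := fibSS _.
have h2 : fib k.+2 = fib k.+1 + fib k := fibSS _.
rewrite !GE e1 e2 e3 h3 h2 !mulnDr; lia.
Qed.

Lemma Gshift a k : 0 < a -> G (a + k.+1) = fib k.+1 * G a.+1 + fib k * G a
  /\ G (a + k.+2) = fib k.+2 * G a.+1 + fib k.+1 * G a.
Proof.
move=> ha; elim: k => [|k [IH1 IH2]].
  have f0 : fib 0 = 0 by [].
  have f1 : fib 1 = 1 by [].
  have f2 : fib 2 = 1 by [].
  rewrite f0 f1 f2 addn1 addn2 GSS //; lia.
split => //.
have -> : a + k.+3 = (a + k.+1).+2 by lia.
rewrite GSS; last by lia.
have -> : (a + k.+1).+1 = a + k.+2 by lia.
rewrite IH1 IH2 (fibSS k.+1) (fibSS k) !mulnDl; lia.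
Qed.

Lemma G1 : G 1 = c. Proof. by rewrite GE /= muln1 muln0 addn0. Qed.
Lemma G2 : G 2 = c + d. Proof. by rewrite GE /= !muln1. Qed.

Lemma gcd_consec a : 0 < a -> gcdn (G a) (G a.+1) = gcdn c d.
Proof.
elim: a => [|a IH] // _.
case: a IH => [|a] IH. rewrite G1 G2. exact: gcdnDl.
rewrite (GSS a.+1) // gcdnDl gcdnC; exact: IH.
Qed.

Lemma gcdG a b : 0 < a -> a < b -> gcdn (G a) (G b) %| gcdn c d * fib (b - a).
Proof.
move=> ha hab.
have [k ->] : exists k, b = a + k.+1 by exists (b - a).-1; lia.
have -> : a + k.+1 - a = k.+1 by lia.
have [E _] := Gshift a k ha.
set q := gcdn (G a) (G (a + k.+1)).
have q1 : q %| G a by rewrite dvdn_gcdl.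
have q2 : q %| G (a + k.+1) by rewrite dvdn_gcdr.
have q3 : q %| fib k.+1 * G a.+1.
  by move: q2; rewrite E dvdn_addl // dvdn_mull.
have q4 : q %| fib k.+1 * G a by rewrite dvdn_mull.
have : q %| gcdn (fib k.+1 * G a.+1) (fib k.+1 * G a) by rewrite dvdn_gcd q3 q4.
by rewrite -muln_gcdr gcdnC gcd_consec // mulnC.
Qed.

End GS.

Lemma divE a b : Nat.divide a b <-> a %| b.
Proof.
split; first by move=> [z ->]; apply/dvdnP; exists z.
by move/dvdnP => [z ->]; exists z.
Qed.

Lemma gcdE a b : Nat.gcd a b = gcdn a b.
Proof.
apply: Nat.gcd_unique.
- by apply/divE; exact: dvdn_gcdl.
- by apply/divE; exact: dvdn_gcdr.
by move=> q /divE h1 /divE h2; apply/divE; rewrite dvdn_gcd h1 h2.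
Qed.

Lemma Gpos c d k : 0 < c -> 0 < k -> 0 < G c d k.
Proof.
move=> hc hk; rewrite GE; have h1 := @fib_pos k hk.
have : 0 < c * fib k by rewrite muln_gt0 hc h1.
lia.
Qed.

Lemma nat_main c d m n m0 N : 0 < c -> 0 < d -> 0 < m -> m <= m0 -> m0 + N = n ->
  le (nprod (fun i => G c d (m0 + i)) N.+1)
     (lcm_range c d m n * nprod (fun s => Nat.gcd c d * fib s.+1) N).
Proof.
move=> hc hd hm hmm0 hN.
have hL : 0 < lcm_range c d m n.
  apply/ltP; apply: lcm_list_pos => x /in_map_iff [k [<- /in_seq hk]].
  apply/ltP; apply: Gpos => //; apply/ltP; lia.
have H := @key N (lcm_range c d m n) (fun i => G c d (m0 + i))
   (fun s => gcdn c d * fib s) hL.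
apply/leP; rewrite gcdE !nprodE.

apply: dvdn_leq.
  rewrite muln_gt0 hL /=; apply: prodn_gt0 => s.
  by rewrite muln_gt0 gcdn_gt0 hc (@fib_pos s.+1).
apply: H.
- by move=> i _; apply: Gpos => //; lia.
- by move=> i hi; apply/divE; apply: G_div_lcm; lia.
- by move=> s hs; rewrite muln_gt0 gcdn_gt0 hc (@fib_pos s) //; lia.
- move=> i j hij.
  have -> : j - i = (m0 + j) - (m0 + i) by lia.
  apply: gcdG; lia.
Qed.

Lemma nat_main' c d m n m0 N : (0 < c)%coq_nat -> (0 < d)%coq_nat -> (0 < m)%coq_nat ->
  (m <= m0)%coq_nat -> (m0 + N)%coq_nat = n ->
  (nprod (fun i => G c d (m0 + i)%coq_nat) (S N) <=
     Nat.mul (lcm_range c d m n) (nprod (fun s => Nat.mul (Nat.gcd c d) (fib (S s))) N))%coq_nat.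
Proof.
move=> /ltP h1 /ltP h2 /ltP h3 /leP h4 h5; exact: nat_main.
Qed.

End NT.
Open Scope R_scope.



Fixpoint rprod (h : nat -> R) (k : nat) : R :=
  match k with O => 1 | S k' => rprod h k' * h k' end.

Lemma INR_nprod h k : INR (nprod h k) = rprod (fun i => INR (h i)) k.
Proof. induction k; simpl; [reflexivity|]. rewrite mult_INR, IHk. reflexivity. Qed.

Lemma rprod_nonneg u k : (forall i, (i < k)%nat -> 0 <= u i) -> 0 <= rprod u k.
Proof.
  induction k; simpl; intros H; [lra|].
  apply Rmult_le_pos; [apply IHk; intros; apply H; lia| apply H; lia].
Qed.

Lemma rprod_le u v k : (forall i, (i < k)%nat -> 0 <= u i <= v i) -> rprod u k <= rprod v k.
Proof.
  induction k; simpl; intros H; [lra|].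
  apply Rmult_le_compat.
  - apply rprod_nonneg; intros; apply H; lia.
  - apply H; lia.
  - apply IHk; intros; apply H; lia.
  - apply H; lia.
Qed.

Lemma rprod_exp a b k :
  rprod (fun i => exp (a + b * INR i)) k = exp (INR k * a + b * (INR k * (INR k - 1) / 2)).
Proof.
  induction k; simpl rprod.
  - replace (INR 0 * a + b * (INR 0 * (INR 0 - 1) / 2)) with 0 by (simpl; field). now rewrite exp_0.
  - rewrite IHk, <- exp_plus. f_equal. rewrite S_INR. field.
Qed.

Lemma sqrt5_bounds : 2 < sqrt 5 < 3.
Proof.
  assert (H := sqrt_sqrt 5 ltac:(lra)). assert (H0 := sqrt_pos 5). nra.
Qed.

Lemma Phi_sq : Phi * Phi = Phi + 1.
Proof.
  unfold Phi. assert (H := sqrt_sqrt 5 ltac:(lra)). nra.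
Qed.

Lemma Phi_bounds : 1 < Phi < 2.
Proof. unfold Phi. pose proof sqrt5_bounds. lra. Qed.

Lemma fib_SS k : fib (S (S k)) = (fib (S k) + fib k)%nat.
Proof. reflexivity. Qed.

Lemma fib_lower j : Phi ^ j <= INR (fib (j + 2)) /\ Phi ^ (S j) <= Phi * INR (fib (j + 3)).
Proof.
  pose proof Phi_bounds as HB. pose proof Phi_sq as HS.
  induction j as [j IH] using (well_founded_induction lt_wf).
  destruct j as [|[|j]].
  - simpl. split; lra.
  - simpl. split; lra.
  - destruct (IH j ltac:(lia)) as [H1 H2].
    destruct (IH (S j) ltac:(lia)) as [H3 H4].
    assert (E1 : Phi ^ S (S j) = Phi ^ S j + Phi ^ j) by (simpl; rewrite <- Rmult_assoc, HS; ring).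
    assert (E2 : Phi ^ S (S (S j)) = Phi ^ S (S j) + Phi ^ S j) by (simpl; rewrite <- Rmult_assoc, HS; ring).
    replace (S (S j) + 2)%nat with (S (S (j + 2))) by lia.
    replace (S (S j) + 3)%nat with (S (S (j + 3))) by lia.
    rewrite !fib_SS, !plus_INR.
    replace (S (j + 2)) with (S j + 2)%nat by lia.
    replace (S (j + 3)) with (S j + 3)%nat by lia.
    split; [rewrite E1; lra|rewrite E2, Rmult_plus_distr_l; lra].
Qed.

Lemma fib_upper s : INR (fib (s + 1)) <= Phi ^ s.
Proof.
  pose proof Phi_bounds as HB. pose proof Phi_sq as HS.
  induction s as [s IH] using (well_founded_induction lt_wf).
  destruct s as [|[|s]].
  - simpl. lra.
  - simpl. lra.
  - assert (E1 : Phi ^ S (S s) = Phi ^ S s + Phi ^ s) by (simpl; rewrite <- Rmult_assoc, HS; ring).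
    replace (S (S s) + 1)%nat with (S (S (s + 1))) by lia.
    rewrite fib_SS, plus_INR, E1.
    replace (S (s + 1)) with (S s + 1)%nat by lia.
    pose proof (IH s ltac:(lia)). pose proof (IH (S s) ltac:(lia)). lra.
Qed.

Lemma pow_exp x j : 0 < x -> x ^ j = exp (INR j * ln x).
Proof. intros Hx. rewrite <- Rpower_pow by exact Hx. reflexivity. Qed.

Lemma fib_lower2 j : Phi ^ j <= Phi * INR (fib (j + 1)).
Proof.
  pose proof Phi_bounds as HB.
  destruct j as [|j]; [simpl; lra|].
  destruct (fib_lower j) as [H _].
  replace (S j + 1)%nat with (j + 2)%nat by lia. simpl.
  apply Rmult_le_compat_l; lra.
Qed.

Lemma G_lower c d j : (0 < c)%nat ->
  exp (ln (INR c * Phi + INR d) + (INR j - 1) * ln Phi) <= INR (G c d (j + 2)).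
Proof.
  intros Hc0. pose proof Phi_bounds as HB.
  assert (HX : 0 < INR c * Phi + INR d).
  { apply lt_0_INR in Hc0. pose proof (pos_INR d). nra. }
  unfold G. replace (j + 2 - 1)%nat with (j + 1)%nat by lia.
  rewrite plus_INR, !mult_INR.
  destruct (fib_lower j) as [H1 _]. pose proof (fib_lower2 j) as H2.
  pose proof (pos_INR c) as Hc. pose proof (pos_INR d) as Hd.
  rewrite exp_plus, exp_ln by exact HX.
  replace ((INR j - 1) * ln Phi) with (INR j * ln Phi - ln Phi) by ring.
  rewrite Rminus_def, exp_plus, exp_Ropp, exp_ln by lra.
  rewrite <- pow_exp by lra.
  assert (Hd2 : INR d * (Phi ^ j / Phi) <= INR d * INR (fib (j + 1))).
  { apply Rmult_le_compat_l; [lra|]. apply (Rmult_le_reg_l Phi); [lra|].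
    field_simplify; lra. }
  assert (Hc2 : INR c * Phi ^ j <= INR c * INR (fib (j + 2))) by (apply Rmult_le_compat_l; lra).
  replace ((INR c * Phi + INR d) * (Phi ^ j * / Phi)) with (INR c * Phi ^ j + INR d * (Phi ^ j / Phi))
    by (field; lra).
  lra.
Qed.

Lemma gcd_pos c d : (0 < c)%nat -> (0 < Nat.gcd c d)%nat.
Proof.
  intros Hc. destruct (Nat.eq_dec (Nat.gcd c d) 0) as [E|E]; [|lia].
  apply Nat.gcd_eq_0_l in E. lia.
Qed.

Lemma real_main c d m n m0 N : (0 < c)%nat -> (0 < d)%nat -> (0 < m)%nat ->
  (m <= m0)%nat -> (2 <= m0)%nat -> (m0 + N)%nat = n ->
  exp ((INR N + 1) * (ln (INR c * Phi + INR d) + (INR (m0 - 2) - 1) * ln Phi)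
       + ln Phi * ((INR N + 1) * INR N / 2)
       - (INR N * ln (INR (Nat.gcd c d)) + ln Phi * (INR N * (INR N - 1) / 2)))
  <= INR (lcm_range c d m n).
Proof.
  intros Hc Hd Hm Hmm0 H2 HN.
  pose proof Phi_bounds as HB.
  assert (Hg : 0 < INR (Nat.gcd c d)) by (apply lt_0_INR, gcd_pos, Hc).
  pose proof (NT.nat_main' c d m n m0 N Hc Hd Hm Hmm0 HN) as H.
  apply le_INR in H. rewrite mult_INR, !INR_nprod in H.
  set (A := (INR N + 1) * (ln (INR c * Phi + INR d) + (INR (m0 - 2) - 1) * ln Phi)
       + ln Phi * ((INR N + 1) * INR N / 2)).
  set (B := INR N * ln (INR (Nat.gcd c d)) + ln Phi * (INR N * (INR N - 1) / 2)).
  assert (HA : exp A <= rprod (fun i => INR (G c d (m0 + i))) (S N)).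
  { replace (exp A) with (rprod (fun i => exp ((ln (INR c * Phi + INR d) + (INR (m0 - 2) - 1) * ln Phi) + ln Phi * INR i)) (S N))
      by (rewrite rprod_exp; unfold A; f_equal; rewrite S_INR; field).
    apply rprod_le. intros i Hi. split; [left; apply exp_pos|].
    replace (m0 + i)%nat with ((m0 - 2 + i) + 2)%nat by lia.
    eapply Rle_trans; [|apply G_lower; exact Hc].
    right. f_equal. rewrite plus_INR. ring. }
  assert (HB' : rprod (fun s => INR (Nat.gcd c d * fib (S s))) N <= exp B).
  { replace (exp B) with (rprod (fun s => exp (ln (INR (Nat.gcd c d)) + ln Phi * INR s)) N)
      by (rewrite rprod_exp; unfold B; f_equal; field).
    apply rprod_le. intros s Hs. split.
    - apply pos_INR.
    - rewrite mult_INR, exp_plus, exp_ln by exact Hg.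
      apply Rmult_le_compat_l; [lra|].
      rewrite Rmult_comm, <- pow_exp by lra.
      replace (S s) with (s + 1)%nat by lia. apply fib_upper. }
  assert (HL : 0 <= INR (lcm_range c d m n)) by apply pos_INR.
  apply (Rmult_le_reg_r (exp B)); [apply exp_pos|].
  rewrite <- exp_plus. replace (A - B + B) with A by ring.
  eapply Rle_trans; [exact HA|]. eapply Rle_trans; [exact H|].
  apply Rmult_le_compat_l; assumption.
Qed.

Lemma exp_le' x y : x <= y -> exp x <= exp y.
Proof. intros [H|H]; [left; apply exp_increasing, H| rewrite H; lra]. Qed.

Lemma ln_le' x y : 0 < x -> x <= y -> ln x <= ln y.
Proof. intros Hx [H|H]; [left; apply ln_increasing; auto| rewrite H; lra]. Qed.

Lemma rhs_eq c d n : (0 < c)%nat ->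
  INR (Nat.gcd c d)
    * Rpower ((INR c * Phi + INR d) / (Phi * INR (Nat.gcd c d))) ((INR n - 1) / 2)
    * Rpower Phi (INR n ^ 2 / 4 - INR n / 2 - 7 / 4)
  = exp (ln (INR (Nat.gcd c d))
         + ((INR n - 1) / 2) * (ln (INR c * Phi + INR d) - ln Phi - ln (INR (Nat.gcd c d)))
         + (INR n ^ 2 / 4 - INR n / 2 - 7 / 4) * ln Phi).
Proof.
  intros Hc. pose proof Phi_bounds as HB.
  assert (Hg : 0 < INR (Nat.gcd c d)) by (apply lt_0_INR, gcd_pos, Hc).
  assert (HX : 0 < INR c * Phi + INR d).
  { apply lt_0_INR in Hc. pose proof (pos_INR d). nra. }
  assert (HPg : 0 < Phi * INR (Nat.gcd c d)) by (apply Rmult_lt_0_compat; lra).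
  change ((INR c * Phi + INR d) / (Phi * INR (Nat.gcd c d))) with ((INR c * Phi + INR d) * / (Phi * INR (Nat.gcd c d))).
  unfold Rpower. rewrite ln_mult, ln_Rinv by (try apply Rinv_0_lt_compat; lra).
  rewrite ln_mult by lra.
  rewrite <- (exp_ln (INR (Nat.gcd c d))) at 1 by exact Hg.
  rewrite <- !exp_plus. f_equal. ring.
Qed.

Lemma U_nonneg c d : (0 < c)%nat ->
  0 <= ln (INR c * Phi + INR d) - ln Phi - ln (INR (Nat.gcd c d)).
Proof.
  intros Hc. pose proof Phi_bounds as HB.
  assert (Hg : 0 < INR (Nat.gcd c d)) by (apply lt_0_INR, gcd_pos, Hc).
  assert (Hgc : INR (Nat.gcd c d) <= INR c).
  { apply le_INR, Nat.divide_pos_le; [exact Hc| apply Nat.gcd_divide_l]. }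
  pose proof (pos_INR d).
  assert (ln (Phi * INR (Nat.gcd c d)) = ln Phi + ln (INR (Nat.gcd c d))) by (apply ln_mult; lra).
  assert (ln (Phi * INR (Nat.gcd c d)) <= ln (INR c * Phi + INR d)).
  { apply ln_le'; [apply Rmult_lt_0_compat; lra| nra]. }
  lra.
Qed.

Theorem corollary1 (c d n m : nat) :
  (0 < c)%nat -> (0 < d)%nat -> (2 <= n)%nat -> (1 <= m)%nat ->
  (m <= (n + 1) / 2 + 1)%nat ->
  INR (lcm_range c d m n) >=
    INR (Nat.gcd c d)
    * Rpower ((INR c * Phi + INR d) / (Phi * INR (Nat.gcd c d))) ((INR n - 1) / 2)
    * Rpower Phi (INR n ^ 2 / 4 - INR n / 2 - 7 / 4).
Proof.
  intros Hc Hd Hn Hm Hmle.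
  apply Rle_ge. rewrite rhs_eq by exact Hc.
  pose proof (U_nonneg c d Hc) as HU.
  pose proof Phi_bounds as HB.
  assert (Hlp : 0 < ln Phi) by (rewrite <- ln_1; apply ln_increasing; lra).
  set (U := ln (INR c * Phi + INR d) - ln Phi - ln (INR (Nat.gcd c d))) in *.
  destruct (Nat.Even_or_Odd n) as [[k Hk]|[k Hk]].
  - destruct k as [|j]; [lia|].
    assert (Hdiv : ((n + 1) / 2 = S j)%nat).
    { symmetry. apply (Nat.div_unique _ _ _ 1); lia. }
    pose proof (real_main c d m n (S j + 1) j Hc Hd ltac:(lia) ltac:(lia) ltac:(lia) ltac:(lia)) as RM.
    eapply Rle_trans; [|exact RM]. apply exp_le'.
    replace (S j + 1 - 2)%nat with j in * by lia.
    replace (INR n) with (2 * INR j + 2) by (rewrite Hk, mult_INR, S_INR; change (INR 2) with (1+1); rewrite (S_INR j); change (INR 1) with 1; lra).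
    assert (E : ln (INR c * Phi + INR d) = U + ln Phi + ln (INR (Nat.gcd c d))) by (unfold U; ring).
    rewrite E.
    assert (0 <= (INR j + 7/4) * ln Phi) by (apply Rmult_le_pos; [pose proof (pos_INR j)|]; lra).
    match goal with |- ?L <= ?R => assert (R - L = 1/2 * U + (INR j + 7/4) * ln Phi) by field end.
    lra.
  - destruct k as [|j]; [lia|].
    assert (Hdiv : ((n + 1) / 2 = S j + 1)%nat).
    { symmetry. apply (Nat.div_unique _ _ _ 0); lia. }
    pose proof (real_main c d m n (S j + 2) j Hc Hd ltac:(lia) ltac:(lia) ltac:(lia) ltac:(lia)) as RM.
    eapply Rle_trans; [|exact RM]. apply exp_le'.
    replace (S j + 2 - 2)%nat with (S j) in * by lia.
    replace (INR n) with (2 * INR j + 3) by (rewrite Hk, plus_INR, mult_INR, (S_INR j); change (INR 2) with 2; change (INR 1) with 1; lra).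
    rewrite S_INR.
    assert (E : ln (INR c * Phi + INR d) = U + ln Phi + ln (INR (Nat.gcd c d))) by (unfold U; ring).
    rewrite E.
    assert (0 <= (INR j + 2) * ln Phi) by (apply Rmult_le_pos; [pose proof (pos_INR j)|]; lra).
    match goal with |- ?L <= ?R => assert (R - L = (INR j + 2) * ln Phi) by field end.
    lra.
Qed.
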